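(* Let $\mathcal{H}$ be a complex Hilbert space, let $N(\cdot)$ be a norm on $\mathbb{B}(\mathcal{H})$, and let $T\in\mathbb{B}(\mathcal{H})$. Then $$w_{N}(T) \leq \inf_{\varphi \in \mathbb{R}}\sqrt{N^2\big({\rm Re}(e^{i\varphi}T)\big) + N^2\big({\rm Im}(e^{i\varphi}T)\big)}.$$
   Context: $\mathbb{B}(\mathcal{H})$ is the algebra of bounded linear operators on $\mathcal{H}$. For $A\in\mathbb{B}(\mathcal{H})$, ${\rm Re}(A)=\frac{A+A^*}{2}$ and ${\rm Im}(A)=\frac{A-A^*}{2i}$. For a norm $N(\cdot)$ on $\mathbb{B}(\mathcal{H})$, the generalized numerical radius is $w_N(T)=\sup_{\theta\in\mathbb{R}} N\big({\rm Re}(e^{i\theta}T)\big)$. *)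

(* Defs.v *)
From HB Require Import structures.
From mathcomp Require Import all_boot all_order all_algebra.
From mathcomp Require Import all_classical all_reals all_analysis.
From mathcomp Require Import complex.
Set Implicit Arguments. Unset Strict Implicit. Unset Printing Implicit Defensive.
Import Order.TTheory GRing.Theory Num.Theory.
Local Open Scope ring_scope.
Local Open Scope classical_set_scope.

Section Hilbert.
Variables (R : realType) (V : lmodType (complex R)).
Local Notation C := (complex R).

Definition is_inner_product (ip : V -> V -> C) : Prop :=
  [/\ (forall (a : C) (x y z : V), ip (a *: x + y) z = a * ip x z + ip y z),
      (forall x y : V, ip y x = conjc (ip x y)),
      (forall x : V, complex.Im (ip x x) = 0 /\ 0 <= complex.Re (ip x x))
    & (forall x : V, ip x x = 0 -> x = 0)].

Definition ipnorm (ip : V -> V -> C) (x : V) : R := Num.sqrt (complex.Re (ip x x)).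

Definition ip_complete (ip : V -> V -> C) : Prop :=
  forall u : nat -> V,
    (forall e : R, 0 < e -> exists N : nat, forall m n : nat,
        (N <= m)%N -> (N <= n)%N -> ipnorm ip (u m - u n) < e) ->
    exists l : V, forall e : R, 0 < e -> exists N : nat, forall n : nat,
        (N <= n)%N -> ipnorm ip (u n - l) < e.

Definition is_hilbert (ip : V -> V -> C) : Prop :=
  is_inner_product ip /\ ip_complete ip.

Definition bounded_op (ip : V -> V -> C) (A : V -> V) : Prop :=
  (forall (a : C) (x y : V), A (a *: x + y) = a *: A x + A y) /\
  (exists M : R, forall x : V, ipnorm ip (A x) <= M * ipnorm ip x).

Definition is_adjoint (ip : V -> V -> C) (A As : V -> V) : Prop :=
  forall x y : V, ip (A x) y = ip x (As y).

Definition op_add (A B : V -> V) : V -> V := fun x => A x + B x.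
Definition op_scale (c : C) (A : V -> V) : V -> V := fun x => c *: A x.

Definition is_op_norm (ip : V -> V -> C) (N : (V -> V) -> R) : Prop :=
  [/\ (forall A B, bounded_op ip A -> bounded_op ip B ->
         N (op_add A B) <= N A + N B),
      (forall (c : C) A, bounded_op ip A -> N (op_scale c A) = Normc.normc c * N A),
      (forall A, bounded_op ip A -> 0 <= N A)
    & (forall A, bounded_op ip A -> N A = 0 -> A = (fun _ => 0))].

Definition op_Re (A As : V -> V) : V -> V :=
  fun x => (2%:R : C)^-1 *: (A x + As x).
Definition op_Im (A As : V -> V) : V -> V :=
  fun x => (2%:R * Complex 0 1 : C)^-1 *: (A x - As x).

Definition expi (t : R) : C := Complex (cos t) (sin t).

(* generalized numerical radius w_N(T) = sup_theta N(Re(e^{i theta} T)),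
   where (e^{i theta} T)^* = e^{-i theta} T^* *)
Definition w_N (N : (V -> V) -> R) (T Ts : V -> V) : \bar R :=
  ereal_sup [set (N (op_Re (op_scale (expi t) T) (op_scale (conjc (expi t)) Ts)))%:E
            | t in [set: R]].

End Hilbert.

(* Main.v *)
Require Import Defs.
From HB Require Import structures.
From mathcomp Require Import all_boot all_order all_algebra.
From mathcomp Require Import all_classical all_reals all_analysis.
From mathcomp Require Import complex.
From mathcomp Require Import ring lra.
Import Order.TTheory GRing.Theory Num.Theory.
Local Open Scope ring_scope.
Local Open Scope classical_set_scope.

Section Helpers.
Variables (R : realType) (V : lmodType (complex R)) (ip : V -> V -> complex R).
Hypothesis Hip : is_inner_product ip.
Local Notation q x := (complex.Re (ip x x)).

Lemma ip_linl (a : complex R) x y z : ip (a *: x + y) z = a * ip x z + ip y z.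
Proof. by case: Hip. Qed.

Lemma ip_linr (a : complex R) x y z : ip x (a *: y + z) = conjc a * ip x y + ip x z.
Proof.
case: Hip => _ Hs _ _.
by rewrite Hs ip_linl rmorphD rmorphM /= -!Hs.
Qed.

Lemma q_ge0 x : 0 <= q x. Proof. by case: Hip => _ _ H _; case: (H x). Qed.
Lemma q_Im x : complex.Im (ip x x) = 0. Proof. by case: Hip => _ _ H _; case: (H x). Qed.

Lemma ip_addl x y z : ip (x + y) z = ip x z + ip y z.
Proof. by rewrite -[x in LHS]scale1r ip_linl mul1r. Qed.
Lemma ip_addr x y z : ip x (y + z) = ip x y + ip x z.
Proof. by rewrite -[y in LHS]scale1r ip_linr conjc1 mul1r. Qed.
Lemma ip0l z : ip 0 z = 0.
Proof. have := ip_addl 0 0 z; rewrite addr0 => /eqP; rewrite -{1}[ip 0 z]addr0 (inj_eq (@addrI _ _)) eq_sym => /eqP; exact. Qed.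
Lemma ip0r z : ip z 0 = 0.
Proof. have := ip_addr z 0 0; rewrite addr0 => /eqP; rewrite -{1}[ip z 0]addr0 (inj_eq (@addrI _ _)) eq_sym => /eqP; exact. Qed.
Lemma ip_scalel (a : complex R) x z : ip (a *: x) z = a * ip x z.
Proof. by rewrite -[a *: x]addr0 ip_linl ip0l addr0. Qed.
Lemma ip_scaler (a : complex R) x z : ip x (a *: z) = conjc a * ip x z.
Proof. by rewrite -[a *: z]addr0 ip_linr ip0r addr0. Qed.

Lemma Re_sym x y : complex.Re (ip y x) = complex.Re (ip x y).
Proof. by case: Hip => _ Hs _ _; rewrite Hs; case: (ip x y). Qed.

Lemma mulcE' (a b c d : R) : (Complex a b) * (Complex c d) = Complex (a*c - b*d) (a*d+b*c).
Proof. by []. Qed.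

Lemma ReD (a b : complex R) : complex.Re (a + b) = complex.Re a + complex.Re b.
Proof. by case: a; case: b. Qed.

Lemma q_add x y : q (x + y) = q x + q y + 2 * complex.Re (ip x y).
Proof.
rewrite ip_addl !ip_addr !ReD (Re_sym y x); ring.
Qed.

Lemma q_scale (a : complex R) x : q (a *: x) = (complex.Re a ^+ 2 + complex.Im a ^+ 2) * q x.
Proof.
rewrite ip_scalel ip_scaler.
move: (q_Im x); case: (ip x x) => u v /= ->; case: a => a b; rewrite /conjc /=.
ring.
Qed.

Lemma two_Re_le x y : 2 * complex.Re (ip x y) <= q x + q y.
Proof.
have := q_ge0 (x + (-1) *: y).
rewrite q_add q_scale ip_scaler /=.
case: (ip x y) => u v /=; rewrite /conjc /= sqrrN expr1n oppr0 expr0n /= addr0 mul1r; lra.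
Qed.


Definition bq (A : V -> V) := exists K : R, 0 <= K /\ forall x, q (A x) <= K * q x.
Definition lin (A : V -> V) := forall (a : complex R) (x y : V), A (a *: x + y) = a *: A x + A y.

Lemma bq_of_bounded A : bounded_op ip A -> bq A.
Proof.
case=> _ [M HM].
have mr : 0 <= Num.max M 0 by rewrite le_max lexx orbT.
have ml : M <= Num.max M 0 by rewrite le_max lexx.
exists (Num.max M 0 ^+ 2); split; first exact: exprn_ge0.
move=> x; have := HM x; rewrite /ipnorm.
have h1 := sqr_sqrtr (q_ge0 (A x)); have h2 := sqr_sqrtr (q_ge0 x).
have g1 := sqrtr_ge0 (q (A x)); have g2 := sqrtr_ge0 (q x).
move: mr ml.
set a := Num.sqrt (q (A x)) in h1 g1 *; set b := Num.sqrt (q x) in h2 g2 *; set m := Num.max M 0.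
rewrite -h1 -h2 => m0 mM H.
have H' : a <= m * b by apply: (le_trans H); apply: ler_wpM2r.
rewrite -exprMn; have : 0 <= m * b by exact: mulr_ge0.
nra.
Qed.

Lemma bounded_of A : lin A -> bq A -> bounded_op ip A.
Proof.
move=> HA [K [K0 HK]]; split=> //; exists (Num.sqrt K) => x.
rewrite /ipnorm -sqrtrM //; rewrite ler_sqrt; first exact: HK.
exact: mulr_ge0 (q_ge0 x).
Qed.

Lemma q_add_le x y : q (x + y) <= 2 * q x + 2 * q y.
Proof. rewrite q_add; have := two_Re_le x y; lra. Qed.

Lemma bq_add A B : bq A -> bq B -> bq (op_add A B).
Proof.
move=> [K [K0 HK]] [L [L0 HL]]; exists (2 * K + 2 * L); split; first lra.
move=> x; rewrite /op_add; apply: (le_trans (q_add_le _ _)).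
have := HK x; have := HL x; lra.
Qed.

Lemma bq_scale c A : bq A -> bq (op_scale c A).
Proof.
move=> [K [K0 HK]]; exists ((complex.Re c ^+ 2 + complex.Im c ^+ 2) * K); split.
  by apply: mulr_ge0 => //; apply: addr_ge0; apply: sqr_ge0.
move=> x; rewrite /op_scale q_scale -mulrA; apply: ler_wpM2l; first by apply: addr_ge0; apply: sqr_ge0.
exact: HK.
Qed.

Lemma lin_add A B : lin A -> lin B -> lin (op_add A B).
Proof.
move=> HA HB a x y; rewrite /op_add HA HB scalerDr.
by rewrite -!addrA; congr (_ + _); rewrite addrCA.
Qed.

Lemma lin_scale c A : lin A -> lin (op_scale c A).
Proof. by move=> HA a x y; rewrite /op_scale HA scalerDr !scalerA mulrC. Qed.

Lemma bounded_add A B : bounded_op ip A -> bounded_op ip B -> bounded_op ip (op_add A B).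
Proof.
move=> hA hB; apply: bounded_of; last by apply: bq_add; apply: bq_of_bounded.
by apply: lin_add; [case: hA | case: hB].
Qed.

Lemma bounded_scale c A : bounded_op ip A -> bounded_op ip (op_scale c A).
Proof.
move=> hA; apply: bounded_of; last by apply: bq_scale; apply: bq_of_bounded.
by apply: lin_scale; case: hA.
Qed.

Lemma ip_subr x u v : ip x (u - v) = ip x u - ip x v.
Proof. by rewrite -scaleN1r ip_addr ip_scaler rmorphN1 mulN1r. Qed.

Lemma adjoint_bounded T Ts : bounded_op ip T -> is_adjoint ip T Ts -> bounded_op ip Ts.
Proof.
move=> hT hadj; have [linT _] := hT.
apply: bounded_of.
  move=> a y z; apply/eqP; rewrite -subr_eq0; apply/eqP.
  case: Hip => _ _ _ Hdef; apply: Hdef.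
  set w := _ - _.
  rewrite {2}/w ip_subr -!hadj ip_linr ip_addr ip_scaler !hadj subrr //.
have [K [K0 HK]] := bq_of_bounded T hT.
exists (K + 1); split; first lra.
move=> y; set z := Ts y.
have Hz : complex.Re (ip (T z) y) = q z by rewrite hadj.
set s := (K + 1)^-1.
have sK : s * (K + 1) = 1 by rewrite mulVf //; lra.
have s0 : 0 < s by rewrite invr_gt0; lra.
have H := two_Re_le ((s%:C)%C *: T z) y.
rewrite ip_scalel q_scale /= in H.
rewrite (_ : complex.Re ((s%:C)%C * ip (T z) y) = s * complex.Re (ip (T z) y)) in H; last first.
  by case: (ip (T z) y) => u v; rewrite /= mul0r subr0.
have H2 : q (T z) <= (K + 1) * q z by apply: (le_trans (HK z)); apply: ler_wpM2r; [exact: q_ge0 | lra].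
move: H; rewrite expr0n /= addr0 Hz => H1.
have H3 : s ^+ 2 * q (T z) <= s ^+ 2 * ((K + 1) * q z) by apply: ler_wpM2l => //; exact: sqr_ge0.
rewrite (_ : s ^+ 2 * ((K + 1) * q z) = s * q z) in H3; last by rewrite expr2 -mulrA (mulrA s (K+1)) sK mul1r.
have H4 : s * q z <= q y by lra.
have H5 : (K + 1) * (s * q z) <= (K + 1) * q y by apply: ler_wpM2l => //; lra.
by rewrite mulrA [(K + 1) * s]mulrC sK mul1r in H5.
Qed.


Lemma addcE' (a b c d : R) : (Complex a b) + (Complex c d) = Complex (a + c) (b + d).
Proof. by []. Qed.
Lemma oppcE' (a b : R) : - (Complex a b) = Complex (- a) (- b).
Proof. by []. Qed.
Lemma two_C : (2%:R : complex R) = Complex 2 0.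
Proof. by rewrite mulr2n addcE' addr0. Qed.

Lemma inv2C : (2%:R : complex R)^-1 = Complex (2^-1) 0.
Proof. apply: mulr1_eq; rewrite two_C mulcE'; congr Complex; (field; rewrite ?pnatr_eq0 //). Qed.

Lemma inv2iC : (2%:R * Complex 0 1 : complex R)^-1 = Complex 0 (- 2^-1).
Proof. apply: mulr1_eq; rewrite two_C !mulcE'; congr Complex; (field; rewrite ?pnatr_eq0 //). Qed.

Lemma key (c s : R) (u v : V) :
  (2%:R : complex R)^-1 *: (Complex c s *: u + conjc (Complex c s) *: v) =
  Complex c 0 *: ((2%:R : complex R)^-1 *: (u + v)) +
  Complex (- s) 0 *: ((2%:R * Complex 0 1 : complex R)^-1 *: (u - v)).
Proof.
rewrite !scalerDr !scalerN !scalerA addrACA -scalerDl -scaleNr -scalerDl.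
rewrite inv2C inv2iC /conjc.
congr (_ *: _ + _ *: _); rewrite !mulcE' ?oppcE' addcE'; congr Complex; (field; rewrite ?pnatr_eq0 //).
Qed.

End Helpers.

Lemma final_ineq (R : realType) (a b c s : R) : 0 <= a -> 0 <= b -> c ^+ 2 + s ^+ 2 = 1 ->
  `|c| * a + `|s| * b <= Num.sqrt (a ^+ 2 + b ^+ 2).
Proof.
move=> a0 b0 cs.
have x0 : 0 <= `|c| * a + `|s| * b by apply: addr_ge0; apply: mulr_ge0.
rewrite -(ger0_norm x0) -sqrtr_sqr ler_sqrt; last by apply: addr_ge0; apply: sqr_ge0.
have hc : `|c| ^+ 2 = c ^+ 2 by rewrite real_normK ?num_real.
have hs : `|s| ^+ 2 = s ^+ 2 by rewrite real_normK ?num_real.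
have := sqr_ge0 (`|c| * b - `|s| * a).
have : (`|c| * a + `|s| * b) ^+ 2 = `|c| ^+ 2 * a ^+ 2 + `|s| ^+ 2 * b ^+ 2 + 2 * (`|c| * b) * (`|s| * a) by ring.
have : (`|c| * b - `|s| * a) ^+ 2 = `|c| ^+ 2 * b ^+ 2 + `|s| ^+ 2 * a ^+ 2 - 2 * (`|c| * b) * (`|s| * a) by ring.
rewrite hc hs => -> -> H.
have -> : a ^+ 2 + b ^+ 2 = (c ^+ 2 + s ^+ 2) * (a ^+ 2 + b ^+ 2) by rewrite cs mul1r.
lra.
Qed.

Lemma normc_real (R : realType) (c : R) : Normc.normc (Complex c 0) = `|c|.
Proof. by rewrite /Normc.normc expr0n addr0 sqrtr_sqr. Qed.

Lemma expiD (R : realType) (p t : R) : expi t = expi p * Complex (cos (t - p)) (sin (t - p)).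
Proof.
rewrite /expi mulcE'.
set d := t - p; have -> : t = p + d by rewrite /d addrC subrK.
by rewrite cosD sinD; congr Complex; rewrite addrC.
Qed.

Theorem theorem2p1 (R : realType) (V : lmodType (complex R))
  (ip : V -> V -> complex R) (N : (V -> V) -> R) (T Ts : V -> V) :
  is_hilbert ip ->
  is_op_norm ip N ->
  bounded_op ip T ->
  is_adjoint ip T Ts ->
  (w_N N T Ts <=
   ereal_inf [set (Num.sqrt
       (N (op_Re (op_scale (expi p) T) (op_scale (conjc (expi p)) Ts)) ^+ 2 +
        N (op_Im (op_scale (expi p) T) (op_scale (conjc (expi p)) Ts)) ^+ 2))%:E
     | p in [set: R]])%E.
Proof.
move=> [Hip _] [Ntri Nhom N0 _] hT hadj.
have hTs := @adjoint_bounded _ _ _ Hip _ _ hT hadj.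
have bS := @bounded_scale _ _ _ Hip; have bA := @bounded_add _ _ _ Hip.
apply: ge_ereal_sup => _ [t _ <-]; apply: le_ereal_inf_tmp => _ [p _ <-].
rewrite lee_fin.
set S := op_scale (expi p) T; set Ss := op_scale (conjc (expi p)) Ts.
have hS : bounded_op ip S by apply: (bS).
have hSs : bounded_op ip Ss by apply: (bS).
have hA : bounded_op ip (op_Re S Ss) by apply: (bS); apply: (bA).
have EB : op_Im S Ss = op_scale (2%:R * Complex 0 1 : complex R)^-1 (op_add S (op_scale (-1) Ss)).
  by apply: funext => x; rewrite /op_Im /op_scale /op_add scaleN1r.
have hB : bounded_op ip (op_Im S Ss).
  by rewrite EB; apply: (bS); apply: (bA) => //; apply: (bS).
set c := cos (t - p); set s := sin (t - p).
have E : op_Re (op_scale (expi t) T) (op_scale (conjc (expi t)) Ts) =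
   op_add (op_scale (Complex c 0) (op_Re S Ss)) (op_scale (Complex (- s) 0) (op_Im S Ss)).
  apply: funext => x; rewrite /op_Re /op_Im /op_add /S /Ss /op_scale.
  rewrite (expiD _ p t) rmorphM -!scalerA -/c -/s.
  by rewrite -key; congr (_ *: (_ + _)); rewrite !scalerA mulrC.
rewrite E; apply: (le_trans (Ntri _ _ _ _)); try by apply: (bS).
rewrite (Nhom (Complex c 0) (op_Re S Ss) hA) (Nhom (Complex (- s) 0) (op_Im S Ss) hB) !normc_real normrN.
apply: final_ineq; try exact: N0.
exact: cos2Dsin2.
Qed.
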